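(* Let $p>3$ be a prime, $\zeta=e^{2\pi i/p}$, $K=\mathbb{Q}(\zeta)$, and let $x,y,z\in\mathbb{Z}\setminus\{0\}$ be coprime with $x^p+y^p+z^p=0$ and $p\mid y$. Let $q\ne p$ be a prime and $\mathfrak{q}_K$ a prime ideal of $\mathbb{Z}_K$ above $q$. Then for $k=1,\dots,p-2$: (i) if $\mathfrak{q}_K\mid x\zeta-y$ then $\big(\frac{x+\zeta^k y}{\mathfrak{q}_K}\big)_K=\big(\frac{\zeta^{k/2}}{\mathfrak{q}_K}\big)_K\big(\frac{\epsilon_{k+1}}{\mathfrak{q}_K}\big)_K$; (ii) if $\mathfrak{q}_K\mid z\zeta-y$ then $\big(\frac{z+\zeta^k y}{\mathfrak{q}_K}\big)_K=\big(\frac{\zeta^{k/2}}{\mathfrak{q}_K}\big)_K\big(\frac{\epsilon_{k+1}}{\mathfrak{q}_K}\big)_K$; (iii) if $\mathfrak{q}_K\mid x\zeta-z$ then $\big(\frac{x+\zeta^k z}{\mathfrak{q}_K}\big)_K\big(\frac{p}{\mathfrak{q}_K}\big)_K=\big(\frac{\zeta^{k/2}}{\mathfrak{q}_K}\big)_K\big(\frac{\epsilon_{k+1}}{\mathfrak{q}_K}\big)_K$.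
   Context: Exponents of $\zeta$ are read modulo $p$, with $1/2$ denoting the inverse of $2$ modulo $p$. For $1\le a\le p-1$, $\epsilon_a=\zeta^{(1-a)/2}\cdot\frac{1+\zeta^a}{1+\zeta}$ (a real cyclotomic unit; $\epsilon_1=1$). For a prime ideal $\mathfrak{P}$ of $\mathbb{Z}_K$ not above $p$ and $\alpha\in K$ prime to $\mathfrak{P}$, $(\alpha/\mathfrak{P})_K$ is the unique $\zeta^\mu$ with $\alpha^{(N\mathfrak{P}-1)/p}\equiv\zeta^\mu\pmod{\mathfrak{P}}$, $N\mathfrak{P}=|\mathbb{Z}_K/\mathfrak{P}|$. *)

(* Defs.v *)
From HB Require Import structures.
From mathcomp Require Import all_boot all_order all_algebra all_field.
From Stdlib Require Import ClassicalEpsilon.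
Set Implicit Arguments. Unset Strict Implicit. Unset Printing Implicit Defensive.
Import Order.TTheory GRing.Theory Num.Theory.
Local Open Scope ring_scope.

Definition inK (z : algC) (x : algC) : Prop :=
  exists c : {poly rat}, x = (map_poly ratr c).[z].

Definition ZK (z : algC) (x : algC) : Prop := inK z x /\ x \in Aint.

Definition is_prime_ideal (z : algC) (P : algC -> Prop) : Prop :=
  (forall x, P x -> ZK z x) /\
  P 0 /\
  (forall x y, P x -> P y -> P (x + y)) /\
  (forall a x, ZK z a -> P x -> P (a * x)) /\
  ~ P 1 /\
  (forall a b, ZK z a -> ZK z b -> P (a * b) -> P a \/ P b).

(* |Z_K / P| = N : there is a complete system of N pairwise incongruent
   representatives of Z_K modulo P. *)
Definition quot_card (z : algC) (P : algC -> Prop) (N : nat) : Prop :=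
  exists s : seq algC,
    size s = N /\
    (forall r, r \in s -> ZK z r) /\
    (forall i j, (i < N)%N -> (j < N)%N -> P (s`_i - s`_j) -> i = j) /\
    (forall x, ZK z x -> exists2 i, (i < N)%N & P (x - s`_i)).

(* p-th power residue symbol (a / P)_K, where N = N P: the (unique) z^mu with
   a^((N-1)/p) = z^mu mod P. *)
Definition prs (p : nat) (z : algC) (P : algC -> Prop) (N : nat) (a : algC)
  : algC :=
  epsilon (inhabits 0)
    (fun w => exists mu : nat, w = z ^+ mu /\ P (a ^+ ((N - 1) %/ p) - w)).

(* 1/2 modulo p (p odd) *)
Definition inv2mod (p : nat) : nat := (p.+1)./2.

(* epsilon_a = z^((1-a)/2) (1 + z^a) / (1 + z) *)
Definition cyc_unit (p : nat) (z : algC) (a : nat) : algC :=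
  z ^+ ((p.+1 - a) * inv2mod p) * (1 + z ^+ a) / (1 + z).

(* Main.v *)
Require Import Defs.
From HB Require Import structures.
From mathcomp Require Import all_boot all_order all_algebra all_field.
From mathcomp Require Import ring zify.
From Stdlib Require Import ClassicalEpsilon.
Import Order.TTheory GRing.Theory Num.Theory.
Local Open Scope ring_scope.

Lemma gcdnX (a c n : nat) : gcdn (a ^ n) (c ^ n) = (gcdn a c ^ n)%N.
Proof.
have [d0|dp] := posnP (gcdn a c).
  have: ~~ (0 < gcdn a c)%N by rewrite d0.
  rewrite gcdn_gt0 negb_or !lt0n !negbK => /andP[/eqP ea /eqP ec].
  by rewrite ea ec gcdnn.
set d := gcdn a c.
have ea : a = (a %/ d * d)%N by rewrite divnK // dvdn_gcdl.
have ec : c = (c %/ d * d)%N by rewrite divnK // dvdn_gcdr.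
have cop : coprime (a %/ d) (c %/ d).
  rewrite /coprime -(eqn_pmul2r dp) mul1n muln_gcdl -ea -ec.
  by [].
rewrite {1}ea {1}ec !expnMn -muln_gcdl.
by rewrite (eqP (coprimeXr _ (coprimeXl _ cop))) mul1n.
Qed.

Lemma pow_coprime_nat (A B C n : nat) : (0 < n)%N -> coprime A B -> (A * B = C ^ n)%N ->
  A = (gcdn A C ^ n)%N.
Proof.
move=> n0 cAB eAB.
rewrite -gcdnX -eAB -(prednK n0) expnS -muln_gcdr.
by rewrite (eqP (coprimeXl _ cAB)) muln1.
Qed.

Lemma pow_coprime_int (a b c : int) (n : nat) : odd n -> coprimez a b -> a * b = c ^+ n ->
  exists d : int, a = d ^+ n.
Proof.
move=> on cab eab.
have n0 : (0 < n)%N by move: on; case: (n).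
have := @pow_coprime_nat `|a|%N `|b|%N `|c|%N n n0 cab; rewrite -abszM eab abszX => /(_ erefl) eA.
exists ((-1) ^+ (a < 0)%R * (gcdn `|a| `|c|)%:Z).
rewrite exprMn -exprM mulnC exprM -signr_odd on expr1.
rewrite [LHS]intEsign; congr (_ * _); by rewrite {1}eA -!natz natrX.
Qed.

Definition Ssum (p : nat) (a b : int) := \sum_(i < p) a ^+ (p.-1 - i) * (-b) ^+ i.

Lemma Ssum_eq p a b : odd p -> (a + b) * Ssum p a b = a ^+ p + b ^+ p.
Proof.
move=> op; have := subrXX a (-b) p; rewrite exprNn -signr_odd op expr1 opprK.
by rewrite mulN1r opprK /Ssum => <-.
Qed.

Lemma Ssum_mod p a b : (a + b %| Ssum p a b - p%:R * a ^+ p.-1)%Z.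
Proof.
rewrite /Ssum mulr_natl.
have -> : a ^+ p.-1 *+ p = \sum_(i < p) a ^+ p.-1 by rewrite sumr_const card_ord.
rewrite -sumrB; apply: rpred_sum => i _.
have ei : a ^+ p.-1 = a ^+ (p.-1 - i) * a ^+ i.
  by rewrite -exprD subnK // -ltnS prednK // (leq_ltn_trans _ (ltn_ord i)).
rewrite ei -mulrBr; apply: dvdz_mull.
apply/dvdzP; exists (- \sum_(j < i) (-b) ^+ (i.-1 - j) * a ^+ j).
by rewrite subrXX; ring.
Qed.

Lemma gcdz_ge0_eq1 (g : int) : (g %| 1)%Z -> 0 <= g -> g = 1.
Proof.
rewrite dvdzE /= dvdn1 => /eqP h; by case: g h => // n /= ->.
Qed.

Lemma gcd_S p a b : coprimez a b -> (gcdz (a + b) (Ssum p a b) %| p%:Z)%Z.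
Proof.
move=> cab; set g := gcdz _ _.
have g1 : (g %| a + b)%Z by apply: dvdz_gcdl.
have g2 : (g %| Ssum p a b)%Z by apply: dvdz_gcdr.
have g3 : (g %| p%:R * a ^+ p.-1)%Z.
  have := dvdz_trans g1 (Ssum_mod p a b) => h.
  by rewrite -(subKr (Ssum p a b) (p%:R * a ^+ p.-1)) rpredB.
have cga : coprimez g a.
  rewrite /coprimez; apply/eqP; apply: gcdz_ge0_eq1; last by [].
  apply: (@dvdz_trans (gcdz a b)); last by rewrite (eqP cab).
  rewrite dvdz_gcd dvdz_gcdr /=.
  have h1 : (gcdz g a %| a + b)%Z by apply: dvdz_trans (dvdz_gcdl _ _) g1.
  by rewrite -(addKr a b) rpredD // rpredN dvdz_gcdr.
by rewrite -(Gauss_dvdzl _ (coprimezXr p.-1 cga)) -natz.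
Qed.

Lemma G1 p a b c : prime p -> odd p -> coprimez a b -> ~~ (p%:Z %| a + b)%Z ->
  a ^+ p + b ^+ p = c ^+ p -> exists d, a + b = d ^+ p.
Proof.
move=> pp op cab npab e.
apply: (@pow_coprime_int _ (Ssum p a b) c p op); last by rewrite Ssum_eq.
have := gcd_S p a b cab; set g := gcdz _ _ => gp.
have g1 : (g %| a + b)%Z by apply: dvdz_gcdl.
rewrite /coprimez -/g.
case/primeP: pp => _ /(_ _ gp) /orP[] /eqP hg.
  by move: hg; rewrite /g /gcdz /= => ->.
by move: g1 npab; rewrite !dvdzE hg /= => ->.
Qed.

Lemma Tterm (a b : int) i :
  ((a + b) ^+ 2 %| a * (-b) ^+ i - a ^+ i.+1 + i%:R * (a + b) * a ^+ i)%Z.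
Proof.
elim: i => [|i IH]; first by rewrite expr0 expr1 mulr1 mul0r addr0 subrr dvdz0.
case/dvdzP: IH => K eK; apply/dvdzP; exists ((-b) * K + i%:R * a ^+ i).
have e2 : a * (-b) ^+ i = K * (a + b) ^+ 2 + a ^+ i.+1 - i%:R * (a + b) * a ^+ i.
  by rewrite -eK; ring.
rewrite exprS mulrCA e2 !exprS -addn1 natrD; ring.
Qed.

Lemma Ssum_p2 p a b : prime p -> odd p -> (p%:Z %| a + b)%Z -> ~~ (p%:Z %| a)%Z ->
  ~~ (p%:Z ^+ 2 %| Ssum p a b)%Z.
Proof.
move=> pp op pt npa; apply/negP => pS.
have p0 : (0 < p)%N by apply: prime_gt0.
set t := a + b in pt.
have eT : \sum_(i < p) a ^+ (p.-1 - i) * (a * (-b) ^+ i - a ^+ i.+1 + i%:R * t * a ^+ i)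
   = a * Ssum p a b - a ^+ p *+ p + t * a ^+ p.-1 * ('C(p, 2))%:R.
  have -> : 'C(p, 2) = (\sum_(i < p) i)%N by rewrite -bin2_sum big_mkord.
  have -> : a ^+ p *+ p = \sum_(i < p) a ^+ p by rewrite sumr_const card_ord.
  rewrite natr_sum mulr_sumr /Ssum mulr_sumr.
  rewrite -sumrB -big_split /=; apply: eq_bigr => i _.
  have ei : a ^+ p.-1 = a ^+ (p.-1 - i) * a ^+ i.
    by rewrite -exprD subnK // -ltnS prednK.
  have ep : a ^+ p = a * a ^+ p.-1 by rewrite -exprS prednK.
  rewrite ep ei exprS; ring.
have h1 : (p%:Z ^+ 2 %| a * Ssum p a b - a ^+ p *+ p + t * a ^+ p.-1 * ('C(p, 2))%:R)%Z.
  rewrite -eT; apply: rpred_sum => i _; apply: dvdz_mull.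
  by apply: dvdz_trans (Tterm a b i); apply: dvdz_exp2r.
have h2 : (p%:Z ^+ 2 %| t * a ^+ p.-1 * ('C(p, 2))%:R)%Z.
  rewrite mulrAC expr2; apply: dvdz_mulr; apply: dvdz_mul => //.
  rewrite dvdzE /= natz absz_nat; apply: prime_dvd_bin => //.
  have := prime_gt1 pp; rewrite leq_eqVlt => /orP[/eqP ep|] //.
  by rewrite -ep in op.
have h3 : (p%:Z ^+ 2 %| p%:Z * a ^+ p)%Z.
  have := rpredD (rpredB (dvdz_mull a pS) h1) h2.
  by rewrite -mulr_natl; congr (_ %| _)%Z; ring.
have pn0 : p%:Z != 0 by rewrite -lt0n.
move: h3; rewrite expr2 dvdz_mul2l // => h4.
move: npa; rewrite dvdzE.
by move: h4; rewrite dvdzE abszX (Euclid_dvdX _ _ pp) => /andP[->].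
Qed.

Lemma G2 p a b c : prime p -> odd p -> coprimez a b -> (p%:Z %| a + b)%Z ->
  ~~ (p%:Z %| a)%Z -> a ^+ p + b ^+ p = c ^+ p -> exists d, p%:Z * (a + b) = d ^+ p.
Proof.
move=> pp op cab pt npa e.
have pS : (p%:Z %| Ssum p a b)%Z.
  rewrite -(subrK (p%:R * a ^+ p.-1) (Ssum p a b)) rpredD //.
    exact: dvdz_trans pt (Ssum_mod p a b).
  by apply: dvdz_mulr; rewrite natz.
case/dvdzP: (pS) => s es.
have nps : ~~ (p%:Z %| s)%Z.
  apply/negP => ps; move: (Ssum_p2 p a b pp op pt npa); rewrite es expr2.
  by rewrite dvdz_mul.
apply: (@pow_coprime_int _ s c p op); last first.
  have -> : p%:Z * (a + b) * s = (a + b) * (s * p%:Z) by ring.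
  by rewrite -es Ssum_eq.
rewrite coprimezMl; apply/andP; split.
  by rewrite coprimezE /= prime_coprime // -dvdzE.
rewrite /coprimez; apply/eqP; apply: gcdz_ge0_eq1; last by [].
have cps : coprimez p s by rewrite coprimezE /= prime_coprime // -dvdzE.
apply: (@dvdz_trans (gcdz p s)); last by rewrite (eqP cps).
rewrite dvdz_gcd dvdz_gcdr andbT.
apply: dvdz_trans (gcd_S p a b cab).
rewrite dvdz_gcd dvdz_gcdl /= es.
by apply: dvdz_mulr; apply: dvdz_gcdr.
Qed.

Lemma cop_pair (a b c : int) p : (0 < p)%N -> gcdz (gcdz a b) c = 1 ->
  a ^+ p + b ^+ p + c ^+ p = 0 -> coprimez a b.
Proof.
move=> p0 g1 e; set g := gcdz a b in g1 *.
have gc : (g %| c ^+ p)%Z.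
  have -> : c ^+ p = - (a ^+ p + b ^+ p) by rewrite -[LHS]subr0 -e; ring.
  by rewrite rpredN rpredD // dvdz_exp // ?dvdz_gcdl ?dvdz_gcdr.
have cgc : coprimez g (c ^+ p) by apply: coprimezXr; rewrite /coprimez g1.
move/gcdz_idPl: gc; rewrite (eqP cgc) => h.
by rewrite /coprimez -/g /g /gcdz in h *; rewrite {1}h.
Qed.

Lemma p_dvd_sum (x w y : int) p : prime p -> x ^+ p + y ^+ p + w ^+ p = 0 ->
  (p%:Z %| y)%Z -> (p%:Z %| x + w)%Z.
Proof.
move=> pp e py.
have cF := pchar_Fp pp.
rewrite (dvdz_pcharf cF).
suff : ((x + w)%:~R : 'F_p) ^+ p == 0 by rewrite expf_eq0 => /andP[].
rewrite rmorphD exprDn_pchar; last by rewrite pnatE.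
rewrite -!rmorphXn -rmorphD.
have -> : x ^+ p + w ^+ p = - y ^+ p by apply: (addIr (y ^+ p)); rewrite addNr -e; ring.
rewrite rmorphN oppr_eq0 -(dvdz_pcharf cF).
exact: dvdz_exp (prime_gt0 pp) py.
Qed.

Set Implicit Arguments. Unset Strict Implicit.

Section ZKS.
Variables (p : nat) (z : algC) (q : nat) (P : algC -> Prop) (N : nat).
Hypotheses (pp : prime p) (p3 : (3 < p)%N) (zp : p.-primitive_root z)
  (qp : prime q) (qnp : q != p) (HP : is_prime_ideal z P) (Pq : P q%:R)
  (HN : quot_card z P N).

Lemma ZK_int (n : int) : ZK z n%:~R.
Proof.
split; last exact: Aint_int.
exists (n%:~R)%:P; rewrite map_polyC hornerC; exact: (esym (rmorph_int _ n)).
Qed.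

Lemma ZK_nat (n : nat) : ZK z n%:R.
Proof. by have := ZK_int n; rewrite pmulrn. Qed.

Lemma ZK_z : ZK z z.
Proof.
split; last exact: Aint_prim_root zp.
by exists 'X; rewrite map_polyX hornerX.
Qed.

Lemma ZK_add a b : ZK z a -> ZK z b -> ZK z (a + b).
Proof.
move=> [[c1 e1] A1] [[c2 e2] A2]; split; last exact: rpredD.
by exists (c1 + c2); rewrite rmorphD hornerD e1 e2.
Qed.

Lemma ZK_mul a b : ZK z a -> ZK z b -> ZK z (a * b).
Proof.
move=> [[c1 e1] A1] [[c2 e2] A2]; split; last exact: rpredM.
by exists (c1 * c2); rewrite rmorphM hornerM e1 e2.
Qed.

Lemma ZK_opp a : ZK z a -> ZK z (- a).
Proof. by move=> h; rewrite -mulN1r; apply: ZK_mul => //; have := ZK_int (-1). Qed.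

Lemma ZK_sub a b : ZK z a -> ZK z b -> ZK z (a - b).
Proof. by move=> ha hb; apply: ZK_add => //; apply: ZK_opp. Qed.

Lemma ZK_1 : ZK z 1. Proof. by have := ZK_nat 1. Qed.
Lemma ZK_0 : ZK z 0. Proof. by have := ZK_nat 0. Qed.

Lemma ZK_exp a n : ZK z a -> ZK z (a ^+ n).
Proof.
move=> ha; elim: n => [|n IH]; first by rewrite expr0; apply: ZK_1.
by rewrite exprS; apply: ZK_mul.
Qed.

Lemma ZK_zX n : ZK z (z ^+ n). Proof. exact: ZK_exp ZK_z. Qed.

Lemma ZK_sum (I : Type) (r : seq I) (F : I -> algC) :
  (forall i, ZK z (F i)) -> ZK z (\sum_(i <- r) F i).
Proof.
move=> h; elim: r => [|i r IH]; first by rewrite big_nil; apply: ZK_0.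
by rewrite big_cons; apply: ZK_add.
Qed.

Lemma ZK_prod (I : Type) (r : seq I) (Q : pred I) (F : I -> algC) :
  (forall i, ZK z (F i)) -> ZK z (\prod_(i <- r | Q i) F i).
Proof.
move=> h; elim: r => [|i r IH]; first by rewrite big_nil; apply: ZK_1.
by rewrite big_cons; case: (Q i) => //; apply: ZK_mul.
Qed.


Lemma PZ x : P x -> ZK z x. Proof. by case: HP => h _; apply: h. Qed.
Lemma P0 : P 0. Proof. by case: HP => _ [h _]. Qed.
Lemma PD x y : P x -> P y -> P (x + y). Proof. by case: HP => _ [_ [h _]]; apply: h. Qed.
Lemma PM a x : ZK z a -> P x -> P (a * x). Proof. by case: HP => _ [_ [_ [h _]]]; apply: h. Qed.
Lemma P1 : ~ P 1. Proof. by case: HP => _ [_ [_ [_ [h _]]]]. Qed.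
Lemma Pprime a b : ZK z a -> ZK z b -> P (a * b) -> P a \/ P b.
Proof. by case: HP => _ [_ [_ [_ [_ h]]]]; apply: h. Qed.

Lemma PMr a x : ZK z a -> P x -> P (x * a). Proof. by move=> *; rewrite mulrC; apply: PM. Qed.
Lemma PN x : P x -> P (- x).
Proof. by move=> h; rewrite -mulN1r; apply: PM => //; apply: ZK_opp; apply: ZK_1. Qed.
Lemma PB x y : P x -> P y -> P (x - y). Proof. by move=> *; apply: PD => //; apply: PN. Qed.

Lemma Pexp a n : ZK z a -> P (a ^+ n) -> P a.
Proof.
move=> ha; elim: n => [|n IH]; first by rewrite expr0 => /P1.
rewrite exprS => /Pprime [] //; last by apply: ZK_exp.
Qed.

Lemma Pmul2 a b : ZK z a -> ZK z b -> ~ P a -> ~ P b -> ~ P (a * b).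
Proof. by move=> ha hb na nb /(Pprime ha hb) []. Qed.

Lemma P_int_coprime (m n : int) : P m%:~R -> P n%:~R -> coprimez m n -> False.
Proof.
move=> hm hn /eqP c; case: (Bezoutz m n) => u [v e].
apply: P1; have -> : (1 : algC) = (u * m + v * n)%:~R by rewrite e c.
rewrite rmorphD !rmorphM; apply: PD; apply: PM => //; apply: ZK_int.
Qed.

Lemma Pp : ~ P p%:R.
Proof.
move=> h; apply: (@P_int_coprime p q); rewrite ?pmulrn //.
by rewrite coprimezE /= prime_coprime // dvdn_prime2 // eq_sym.
Qed.

Lemma Pz i : ~ P (z ^+ i).
Proof.
move=> h; have hz : P z := Pexp ZK_z h.
apply: P1; rewrite -(prim_expr_order zp) -(prednK (prime_gt0 pp)) exprS.
by apply: PMr => //; apply: ZK_zX.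
Qed.


Lemma p_prod : p%:R = \prod_(1 <= i < p) (1 - z ^+ i).
Proof.
have p0 := prime_gt0 pp.
have e1 := factor_Xn_sub_1 zp.
rewrite big_ltn // expr0 in e1.
have e2 := subrXX 'X (1 : {poly algC}) p; rewrite polyC1 in e1; rewrite expr1n -e1 in e2.
have e3 := mulfI (negbT (polyXsubC_eq0 1)) e2.
rewrite (eq_bigr (fun i => ('X - (z ^+ i)%:P).[1])); last by move=> i _; rewrite hornerXsubC.
rewrite -horner_prod e3 horner_sum.
rewrite (eq_bigr (fun _ => 1)); last by move=> i _; rewrite expr1n mulr1 hornerXn expr1n.
by rewrite sumr_const card_ord.
Qed.

Lemma P1z d : (0 < d < p)%N -> ~ P (1 - z ^+ d).
Proof.
case/andP=> d0 dp h; apply: Pp; rewrite p_prod.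
rewrite (bigD1_seq d) /=; last by rewrite iota_uniq.
  by apply: PMr => //; apply: ZK_prod => i; apply: ZK_sub; [apply: ZK_1 | apply: ZK_zX].
by rewrite mem_index_iota d0.
Qed.

Lemma Pdist i j : P (z ^+ i - z ^+ j) -> i = j %[mod p].
Proof.
rewrite -(prim_expr_mod zp i) -(prim_expr_mod zp j).
have p0 := prime_gt0 pp.
have ap : (i %% p < p)%N by rewrite ltn_mod.
have bp : (j %% p < p)%N by rewrite ltn_mod.
move: (i %% p)%N (j %% p)%N ap bp => a b ap bp.
wlog ab : a b ap bp / (a <= b)%N.
  move=> W; case: (leqP a b) => h; first by apply: W.
  by move=> /PN; rewrite opprB => /(W b a bp ap (ltnW h)) ->.
move=> h; case: (ltnP a b) => [lt|ge]; last by apply/eqP; rewrite eqn_leq ab ge.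
exfalso.
have e : z ^+ a - z ^+ b = z ^+ a * (1 - z ^+ (b - a)).
  by rewrite mulrBr mulr1 -exprD subnKC.
move: h; rewrite e => /Pprime [].
- by apply: ZK_zX.
- by apply: ZK_sub; [apply: ZK_1 | apply: ZK_zX].
- by apply: Pz.
apply: P1z; rewrite subn_gt0 lt /=.
by apply: leq_ltn_trans bp; apply: leq_subr.
Qed.


Lemma fermat a : ZK z a -> ~ P a -> P (a ^+ (N - 1) - 1).
Proof.
move=> za na.
case: HN => s [sz [sZK [sdist scomp]]].
have [i0 i0N Pi0] := scomp 0 ZK_0.
rewrite sub0r in Pi0; have {}Pi0 : P s`_i0 by rewrite -[s`_i0]opprK; apply: PN.
pose o0 := Ordinal i0N.
have H : forall i : 'I_N, exists j : 'I_N, P (a * s`_i - s`_j).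
  move=> i; have si : ZK z s`_i by apply: sZK; apply: mem_nth; rewrite sz.
  have [j jN hj] := scomp (a * s`_i) (ZK_mul za si).
  by exists (Ordinal jN).
pose f := fun i => proj1_sig (constructive_indefinite_description _ (H i)).
have hf : forall i : 'I_N, P (a * s`_i - s`_(f i)).
  by move=> i; rewrite /f; case: (constructive_indefinite_description _ _).
have sZ : forall i : 'I_N, ZK z s`_i.
  by move=> i; apply: sZK; apply: mem_nth; rewrite sz.
have finj : injective f.
  move=> i j e; apply/val_inj; apply: sdist (ltn_ord i) (ltn_ord j) _.
  have := PB (hf i) (hf j); rewrite e.
  have -> : a * s`_i - s`_(f j) - (a * s`_j - s`_(f j)) = a * (s`_i - s`_j) by ring.
  by case/Pprime => //; apply: ZK_sub.
have nzS : forall i : 'I_N, i != o0 -> ~ P s`_i.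
  move=> i ni h; move/eqP: ni; apply; apply/val_inj.
  exact: (sdist _ _ (ltn_ord i) i0N (PB h Pi0)).
have f0 : f o0 = o0.
  apply/val_inj.
  have h1 : P (a * s`_i0) by apply: PM.
  have := PB h1 (hf o0); rewrite /= opprB addrC subrK => h2.
  exact: (sdist _ _ (ltn_ord _) i0N (PB h2 Pi0)).
have eqf : forall i, (f i != o0) = (i != o0).
  by move=> i; rewrite -{1}f0 (inj_eq finj).
set Pi := \prod_(i | i != o0) s`_i.
have E1 : \prod_(i | i != o0) s`_(f i) = Pi.
  by rewrite /Pi [RHS](reindex_inj finj); apply: eq_bigl => i; rewrite eqf.
have E2 : \prod_(i | i != o0) (a * s`_i) = a ^+ (N - 1) * Pi.
  rewrite big_split /= prodr_const cardC1 card_ord subn1 //.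
have K : ZK z (\prod_(i | i != o0) (a * s`_i)) /\ ZK z (\prod_(i | i != o0) s`_(f i)) /\
   P (\prod_(i | i != o0) (a * s`_i) - \prod_(i | i != o0) s`_(f i)).
  apply: (big_ind2 (fun u v => ZK z u /\ ZK z v /\ P (u - v))).
  - by split; [apply: ZK_1 | split; [apply: ZK_1 | rewrite subrr; apply: P0]].
  - move=> x1 x2 y1 y2 [h1 [h2 h3]] [h4 [h5 h6]]; split; first exact: ZK_mul.
    split; first exact: ZK_mul.
    have -> : x1 * y1 - x2 * y2 = x1 * (y1 - y2) + (x1 - x2) * y2 by ring.
    by apply: PD; [apply: PM | apply: PMr].
  - by move=> i _; split; [apply: ZK_mul | split].
have nPi : ZK z Pi /\ ~ P Pi.
  apply: (big_ind (fun u => ZK z u /\ ~ P u)).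
  - by split; [apply: ZK_1 | apply: P1].
  - by move=> x y [h1 h2] [h3 h4]; split; [apply: ZK_mul | apply: Pmul2].
  - by move=> i ni; split; [apply: sZ | apply: nzS].
case: K => _ [_]; rewrite E1 E2.
have -> : a ^+ (N - 1) * Pi - Pi = Pi * (a ^+ (N - 1) - 1) by ring.
case: nPi => zPi nPi.
case/Pprime => //.
by apply: ZK_sub; [apply: ZK_exp | apply: ZK_1].
Qed.


Lemma pdvdN : (p %| N - 1)%N.
Proof.
have := fermat ZK_z; rewrite -{1}(expr1 z) => /(_ (@Pz 1)).
by rewrite -(expr0 z) => /Pdist; rewrite mod0n => /eqP; rewrite -/(dvdn p _).
Qed.

Definition M := ((N - 1) %/ p)%N.

Lemma eM : (M * p)%N = (N - 1)%N.
Proof. by rewrite /M divnK // pdvdN. Qed.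

Lemma sym_eq a mu : P (a ^+ M - z ^+ mu) -> prs p z P N a = z ^+ mu.
Proof.
move=> h; rewrite /prs.
have ex : exists w, exists mu, w = z ^+ mu /\ P (a ^+ ((N - 1) %/ p) - w).
  by exists (z ^+ mu), mu.
case: (epsilon_spec (inhabits 0) _ ex) => nu [-> h2].
have := PB h2 h; rewrite -/M.
have -> : a ^+ M - z ^+ nu - (a ^+ M - z ^+ mu) = z ^+ mu - z ^+ nu by ring.
by move/Pdist => e; apply/eqP; rewrite (eq_prim_root_expr zp) e.
Qed.

Lemma P_prod_seq (r : seq nat) (F : nat -> algC) : (forall i, ZK z (F i)) ->
  P (\prod_(i <- r) F i) -> exists i, P (F i).
Proof.
move=> hF; elim: r => [|i r IH]; first by rewrite big_nil => /P1.
rewrite big_cons => /Pprime [] //.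
- by apply: ZK_prod.
- by move=> h; exists i.
Qed.

Lemma sym_ex a : ZK z a -> ~ P a -> exists mu, P (a ^+ M - z ^+ mu).
Proof.
move=> za na.
have h : P ((a ^+ M) ^+ p - 1) by rewrite -exprM eM; apply: fermat.
have := congr1 (fun r => r.[a ^+ M]) (factor_Xn_sub_1 zp).
rewrite horner_prod /= hornerD hornerN hornerXn hornerC => e.
rewrite -e in h; case: (P_prod_seq _ h) => [i|i]; first by rewrite hornerXsubC; apply: ZK_sub; [apply: ZK_exp | apply: ZK_zX].
by rewrite hornerXsubC => ?; exists i.
Qed.


Lemma cgM x1 x2 y1 y2 : ZK z x1 -> ZK z y2 -> P (x1 - x2) -> P (y1 - y2) ->
  P (x1 * y1 - x2 * y2).
Proof.
move=> h1 h2 h3 h4.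
have -> : x1 * y1 - x2 * y2 = x1 * (y1 - y2) + (x1 - x2) * y2 by ring.
by apply: PD; [apply: PM | apply: PMr].
Qed.

Lemma cgX x y n : ZK z x -> ZK z y -> P (x - y) -> P (x ^+ n - y ^+ n).
Proof.
move=> hx hy h; rewrite subrXX; apply: PMr => //.
by apply: ZK_sum => i; apply: ZK_mul; apply: ZK_exp.
Qed.

Lemma cgT x y w : P (x - y) -> P (y - w) -> P (x - w).
Proof. by move=> h1 h2; have := PD h1 h2; rewrite addrA subrK. Qed.

Lemma oddp : odd p.
Proof.
apply: contraT => ev.
have : (2 %| p)%N by rewrite dvdn2.
by rewrite dvdn_prime2 // => /eqP e; have := p3; rewrite -e.
Qed.

Lemma eh : (inv2mod p * 2)%N = p.+1.
Proof.
by have := odd_double_half p.+1; rewrite /= oddp /= add0n -muln2 /inv2mod.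
Qed.

Definition vv := \sum_(i < inv2mod p) (z ^+ 2) ^+ i.

Lemma ZK_vv : ZK z vv.
Proof. by apply: ZK_sum => i; apply: ZK_exp; apply: ZK_zX. Qed.

Lemma vvE : (1 + z) * vv = 1.
Proof.
have e := subrXX 1 (z ^+ 2) (inv2mod p).
rewrite expr1n -exprM mulnC eh exprS prim_expr_order // mulr1 in e.
have h1 : 1 - z != 0.
  apply/eqP => e0; apply: (@P1z 1); first by rewrite /= prime_gt1.
  by rewrite expr1 e0; apply: P0.
apply: (mulfI h1).
have e2 : \sum_(i < inv2mod p) 1 ^+ ((inv2mod p).-1 - i) * (z ^+ 2) ^+ i = vv.
  by apply: eq_bigr => i _; rewrite expr1n mul1r.
rewrite e2 in e.
have -> : (1 - z) * ((1 + z) * vv) = (1 - z ^+ 2) * vv by ring.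
by rewrite -e mulr1.
Qed.

Lemma nP1pz m : (0 < m < p)%N -> ~ P (1 + z ^+ m).
Proof.
case/andP=> m0 mp h.
have : P ((1 - z ^+ m) * (1 + z ^+ m)).
  by apply: PM => //; apply: ZK_sub; [apply: ZK_1 | apply: ZK_zX].
have -> : (1 - z ^+ m) * (1 + z ^+ m) = z ^+ 0 - z ^+ (2 * m) by rewrite mulnC exprM; ring.
move/Pdist; rewrite mod0n => /eqP; rewrite eq_sym -/(dvdn p _) Gauss_dvdr.
  by move/(dvdn_leq m0); rewrite leqNgt mp.
by rewrite prime_coprime // dvdn_prime2 //; apply/negP => /eqP e; have := p3; rewrite e.
Qed.

Lemma nPvv : ~ P vv.
Proof.
by move=> h; apply: P1; rewrite -vvE; apply: PM => //; apply: ZK_add; [apply: ZK_1 | apply: ZK_z].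
Qed.

Lemma cycE m : cyc_unit p z m = z ^+ ((p.+1 - m) * inv2mod p) * (1 + z ^+ m) * vv.
Proof.
rewrite /cyc_unit; congr (_ * _).
have nz : 1 + z != 0 by apply/eqP => e; have := vvE; rewrite e mul0r => /eqP; rewrite eq_sym oner_eq0.
by apply: (mulfI nz); rewrite vvE mulfV.
Qed.


Lemma wE k : (k <= p)%N ->
  z ^+ (k * inv2mod p) * cyc_unit p z k.+1 = (1 + z ^+ k.+1) * vv.
Proof.
move=> kp; rewrite cycE subSS !mulrA -exprD -mulnDl subnKC //.
by rewrite exprM (prim_expr_order zp) expr1n mul1r.
Qed.

Lemma ZK_cyc m : ZK z (cyc_unit p z m).
Proof.
rewrite cycE; apply: ZK_mul; last exact: ZK_vv.
by apply: ZK_mul; [apply: ZK_zX | apply: ZK_add; [apply: ZK_1 | apply: ZK_zX]].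
Qed.

Lemma nP_cyc m : (0 < m < p)%N -> ~ P (cyc_unit p z m).
Proof.
move=> hm; rewrite cycE; apply: Pmul2; last exact: nPvv.
- by apply: ZK_mul; [apply: ZK_zX | apply: ZK_add; [apply: ZK_1 | apply: ZK_zX]].
- exact: ZK_vv.
apply: Pmul2; [apply: ZK_zX | apply: ZK_add; [apply: ZK_1 | apply: ZK_zX] | apply: Pz | ].
exact: nP1pz.
Qed.

Lemma main_cong k A B : ZK z A -> ZK z B -> P (A * z - B) ->
  P (A + z ^+ k * B - (1 + z ^+ k.+1) * vv * (A + B)).
Proof.
move=> hA hB h.
have -> : A + z ^+ k * B - (1 + z ^+ k.+1) * vv * (A + B) =
  ((1 + z ^+ k.+1) * vv - z ^+ k) * (A * z - B) + A * (1 + z ^+ k.+1) * (1 - (1 + z) * vv).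
  by rewrite exprS; ring.
rewrite vvE subrr mulr0 addr0; apply: PM => //.
apply: ZK_sub; last exact: ZK_zX.
by apply: ZK_mul; [apply: ZK_add; [apply: ZK_1 | apply: ZK_zX] | apply: ZK_vv].
Qed.

Lemma key k A B r d : (0 < k.+1 < p)%N -> ZK z A -> ZK z B -> ZK z r -> ~ P r ->
  ZK z d -> ~ P d -> r * (A + B) = d ^+ p -> P (A * z - B) ->
  prs p z P N (A + z ^+ k * B) * prs p z P N r =
  prs p z P N (z ^+ (k * inv2mod p)) * prs p z P N (cyc_unit p z k.+1).
Proof.
move=> hk hA hB hr nr hd nd erd h.
have kp : (k <= p)%N by case/andP: hk => _ /ltnW /ltnW.
have [m3 h3] := sym_ex hr nr.
have [m2 h2] := sym_ex (ZK_cyc k.+1) (nP_cyc hk).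
rewrite (sym_eq h3) (sym_eq h2).
have -> : prs p z P N (z ^+ (k * inv2mod p)) = z ^+ (k * inv2mod p * M).
  by apply: sym_eq; rewrite -exprM subrr; apply: P0.
set X := A + B.
have hX : ZK z X by apply: ZK_add.
have s2 : P (r ^+ M * X ^+ M - 1).
  by rewrite -exprMn erd -exprM mulnC eM; apply: fermat.
have z13 : z ^+ ((p - 1) * m3) * z ^+ m3 = 1.
  rewrite -exprD -{2}(mul1n m3) -mulnDl subnK ?prime_gt0 //.
  by rewrite exprM (prim_expr_order zp) expr1n.
have s4 : P (X ^+ M - z ^+ ((p - 1) * m3)).
  have -> : X ^+ M - z ^+ ((p - 1) * m3) = z ^+ ((p - 1) * m3) *
    ((z ^+ m3 - r ^+ M) * X ^+ M + (r ^+ M * X ^+ M - 1)) +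
    X ^+ M * (1 - z ^+ ((p - 1) * m3) * z ^+ m3) by ring.
  rewrite z13 subrr mulr0 addr0; apply: PM; first exact: ZK_zX.
  apply: PD => //; apply: PMr; first by apply: ZK_exp.
  by rewrite -opprB; apply: PN.
have s1 := cgX M (ZK_add hA (ZK_mul (ZK_zX k) hB)) (ZK_mul (ZK_mul (ZK_add ZK_1 (ZK_zX k.+1)) ZK_vv) hX) (main_cong k hA hB h).
rewrite -(wE kp) in s1.
set e := cyc_unit p z k.+1 in s1 h2 *.
rewrite exprMn [(_ * e) ^+ M]exprMn -exprM in s1.
have s5 : P (z ^+ (k * inv2mod p * M) * e ^+ M * X ^+ M -
            z ^+ (k * inv2mod p * M) * z ^+ m2 * z ^+ ((p - 1) * m3)).
  apply: cgM => //; first by apply: ZK_mul; [apply: ZK_zX | apply: ZK_exp; apply: ZK_cyc].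
    exact: ZK_zX.
  apply: cgM => //; first exact: ZK_zX.
    exact: ZK_zX.
  by rewrite subrr; apply: P0.
have := cgT s1 s5; rewrite -!exprD => /sym_eq ->.
by rewrite exprD -mulrA z13 mulr1.
Qed.


Lemma noP3 (x y w : int) : gcdz (gcdz x y) w = 1 ->
  P x%:~R -> P y%:~R -> P w%:~R -> False.
Proof.
move=> g hx hy hw.
case: (Bezoutz x y) => u1 [v1 e1]; case: (Bezoutz (gcdz x y) w) => u2 [v2 e2].
apply: P1.
have -> : (1 : algC) = (u2 * (u1 * x + v1 * y) + v2 * w)%:~R by rewrite e1 e2 g.
rewrite !(rmorphD, rmorphM).
by apply: PD; [apply: PM; [apply: ZK_int | apply: PD; apply: PM => //; apply: ZK_int] |
  apply: PM => //; apply: ZK_int].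
Qed.

Lemma third (a b c : int) : a ^+ p + b ^+ p + c ^+ p = 0 ->
  P a%:~R -> P b%:~R -> P c%:~R.
Proof.
move=> e ha hb.
have e2 : (c%:~R : algC) ^+ p = - ((a%:~R) ^+ p + (b%:~R) ^+ p).
  have := congr1 (fun t : int => (t%:~R : algC)) e.
  rewrite /= !rmorphD !rmorphXn rmorph0 => e3.
  by apply: (addIr ((a%:~R : algC) ^+ p + (b%:~R) ^+ p)); rewrite addNr -e3 addrC.
have p0 := prime_gt0 pp.
have hP : P ((c%:~R : algC) ^+ p).
  rewrite e2; apply: PN; rewrite -(prednK p0) !exprS.
  by apply: PD; apply: PMr => //; apply: ZK_exp; apply: ZK_int.
exact: (Pexp (ZK_int c) hP).
Qed.

Lemma pairP (A B : algC) : ZK z A -> ZK z B -> P (A * z - B) -> P (A + B) -> P A /\ P B.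
Proof.
move=> hA hB h1 h2.
have hA1 : P (A * (1 + z)).
  by have := PD h2 h1; rewrite (_ : A + B + (A * z - B) = A * (1 + z)) //; ring.
have PA : P A.
  case/Pprime: hA1 => //; first by apply: ZK_add; [apply: ZK_1 | apply: ZK_z].
  by move=> h; exfalso; apply: (@nP1pz 1); rewrite ?expr1 // prime_gt1.
split => //; have := PB (PMr ZK_z PA) h1.
by rewrite (_ : A * z - (A * z - B) = B) //; ring.
Qed.

Lemma PXn (C : algC) : ZK z C -> P C -> P (C ^+ p).
Proof.
move=> hC h; rewrite -(prednK (prime_gt0 pp)) exprS; apply: PMr => //.
exact: ZK_exp.
Qed.

Lemma sym1 : prs p z P N 1 = 1.
Proof. by rewrite -(expr0 z); apply: sym_eq; rewrite expr1n expr0 subrr; apply: P0. Qed.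


Lemma main_sec (x y w : int) :
  x != 0 -> y != 0 -> w != 0 ->
  gcdz (gcdz x y) w = 1%N ->
  x ^+ p + y ^+ p + w ^+ p = 0 ->
  (p%:Z %| y)%Z ->
  forall k : nat, (1 <= k <= p - 2)%N ->
  let X := x%:~R : algC in
  let Y := y%:~R : algC in
  let W := w%:~R : algC in
  let sym := prs p z P N in
  let rhs := sym (z ^+ (k * inv2mod p)) * sym (cyc_unit p z k.+1) in
  (P (X * z - Y) -> sym (X + z ^+ k * Y) = rhs) /\
  (P (W * z - Y) -> sym (W + z ^+ k * Y) = rhs) /\
  (P (X * z - W) -> sym (X + z ^+ k * W) * sym p%:R = rhs).
Proof using pp p3 zp qp qnp HP Pq HN.
move=> x0 y0 w0 g1 e py k hk X Y W sym rhs.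
rewrite /rhs /sym /X /Y /W.
have p0 := prime_gt0 pp.
have op := oddp.
have hk' : (0 < k.+1 < p)%N by move: hk p3; lia.
have eN : forall a : int, (- a) ^+ p = - a ^+ p.
  by move=> a; rewrite exprNn -signr_odd op expr1 mulN1r.
have cxy := cop_pair x y w p p0 g1 e.
have g2 : gcdz (gcdz y w) x = 1 by rewrite gcdzC gcdzA.
have e2 : y ^+ p + w ^+ p + x ^+ p = 0 by rewrite -e; ring.
have cyw := cop_pair y w x p p0 g2 e2.
have g3 : gcdz (gcdz x w) y = 1 by rewrite gcdzAC.
have e3 : x ^+ p + w ^+ p + y ^+ p = 0 by rewrite -e; ring.
have cxw := cop_pair x w y p p0 g3 e3.
have npx : ~~ (p%:Z %| x)%Z.
  apply/negP => px; have : (p%:Z %| gcdz x y)%Z by rewrite dvdz_gcd px py.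
  by rewrite (eqP cxy) dvdzE /= dvdn1 => /eqP p1; move: (prime_gt1 pp); rewrite p1.
have npw : ~~ (p%:Z %| w)%Z.
  apply/negP => pw; have : (p%:Z %| gcdz y w)%Z by rewrite dvdz_gcd pw py.
  by rewrite (eqP cyw) dvdzE /= dvdn1 => /eqP p1; move: (prime_gt1 pp); rewrite p1.
have sumeq : forall a b c : int, a ^+ p + b ^+ p + c ^+ p = 0 -> a ^+ p + b ^+ p = (- c) ^+ p.
  by move=> a b c h; rewrite eN; apply: (addIr (c ^+ p)); rewrite h addNr.
have ZX := ZK_int x; have ZY := ZK_int y; have ZW := ZK_int w.
have tripl : P x%:~R -> P y%:~R -> P w%:~R -> False := noP3 g1.
split; [|split].
- move=> h.
  have [c ec] : exists c, x + y = c ^+ p.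
    apply: (G1 p x y (-w) pp op cxy); last exact: sumeq.
    apply/negP => h1; move/negP: npx; apply.
    by rewrite (_ : x = (x + y) - y); [apply: rpredB | ring].
  have nPc : ~ P c%:~R.
    move=> Pc; have PXY : P (x%:~R + y%:~R).
      by rewrite -rmorphD ec rmorphXn; apply: PXn => //; apply: ZK_int.
    case: (pairP ZX ZY h PXY) => PX PY.
    exact: (tripl PX PY (third e PX PY)).
  have := key hk' ZX ZY ZK_1 P1 (ZK_int c) nPc _ h.
  rewrite sym1 mulr1; apply.
  by rewrite mul1r -rmorphD ec rmorphXn.
- move=> h.
  have [c ec] : exists c, w + y = c ^+ p.
    have e4 : w ^+ p + y ^+ p + x ^+ p = 0 by rewrite -e; ring.
    apply: (G1 p w y (-x) pp op _ _ (sumeq _ _ _ e4)).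
      by rewrite coprimez_sym.
    apply/negP => h1; move/negP: npw; apply.
    by rewrite (_ : w = (w + y) - y); [apply: rpredB | ring].
  have nPc : ~ P c%:~R.
    move=> Pc; have PWY : P (w%:~R + y%:~R).
      by rewrite -rmorphD ec rmorphXn; apply: PXn => //; apply: ZK_int.
    case: (pairP ZW ZY h PWY) => PW PY.
    exact: (tripl (third e2 PY PW) PY PW).
  have := key hk' ZW ZY ZK_1 P1 (ZK_int c) nPc _ h.
  rewrite sym1 mulr1; apply.
  by rewrite mul1r -rmorphD ec rmorphXn.
- move=> h.
  have [d ed] : exists d, p%:Z * (x + w) = d ^+ p.
    apply: (G2 p x w (-y) pp op cxw _ npx (sumeq _ _ _ e3)).
    exact: (p_dvd_sum x w y p pp e py).
  have erd : p%:R * (x%:~R + w%:~R) = (d%:~R : algC) ^+ p.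
    by rewrite -rmorphD -rmorphXn -ed rmorphM /= -natz rmorph_nat.
  have nPd : ~ P d%:~R.
    move=> Pd; have := PXn (ZK_int d) Pd; rewrite -erd.
    case/Pprime; [apply: ZK_nat | apply: ZK_add => // | exact: Pp | ].
    move=> PXW; case: (pairP ZX ZW h PXW) => PX PW.
    exact: (tripl PX (third e3 PX PW) PW).
  exact: (key hk' ZX ZW (ZK_nat p) Pp (ZK_int d) nPd erd h).
Qed.

End ZKS.

Theorem lemma3p5 (p : nat) (z : algC) (x y w : int) (q : nat)
  (P : algC -> Prop) (N : nat) :
  prime p -> (3 < p)%N -> p.-primitive_root z ->
  x != 0 -> y != 0 -> w != 0 ->
  gcdz (gcdz x y) w = 1%N ->
  x ^+ p + y ^+ p + w ^+ p = 0 ->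
  (p%:Z %| y)%Z ->
  prime q -> q != p ->
  is_prime_ideal z P -> P q%:R -> quot_card z P N ->
  forall k : nat, (1 <= k <= p - 2)%N ->
  let X := x%:~R : algC in
  let Y := y%:~R : algC in
  let W := w%:~R : algC in
  let sym := prs p z P N in
  let rhs := sym (z ^+ (k * inv2mod p)) * sym (cyc_unit p z k.+1) in
  (P (X * z - Y) -> sym (X + z ^+ k * Y) = rhs) /\
  (P (W * z - Y) -> sym (W + z ^+ k * Y) = rhs) /\
  (P (X * z - W) -> sym (X + z ^+ k * W) * sym p%:R = rhs).
Proof.
move=> pp p3 zp x0 y0 w0 g1 e py qp qnp HP Pq HN.
exact: (main_sec pp p3 zp qp qnp HP Pq HN x0 y0 w0 g1 e py).
Qed.
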